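(* Let $(\mathbb{F}(t),\sigma)$ be a $\Pi\Sigma$-extension of a difference field $(\mathbb{F},\sigma)$, and let $A=A_\ell\sigma^\ell+\dots+A_1\sigma+A_0\in\mathbb{F}(t)[\sigma]^{n\times n}$ with $A_0,\dots,A_\ell\in\mathbb{F}(t)^{n\times n}$ and $\det A_\ell\ne0$. Then there exist $\tilde\ell\in\mathbb{N}$ and a unimodular $V\in\mathrm{GL}_n(\mathbb{F}(t)[\sigma,\sigma^{-1}])$ such that $VA=\sum_{i=0}^{\tilde\ell}B_i\sigma^i\in\mathbb{F}(t)[\sigma]^{n\times n}$ with $\det B_0\ne0$. Consequently every head regular system $A(y)=b$ is fully regular.
   Context: A difference field $(\mathbb{F},\sigma)$ is a field (containing $\mathbb{Q}$) with an automorphism $\sigma$; in a $\Pi\Sigma$-extension $(\mathbb{F}(t),\sigma)$, $\sigma$ extends to the rational function field with $\sigma(t)=t+\beta$ or $\sigma(t)=\alpha t$ ($\alpha,\beta\in\mathbb{F}\setminus\{0\}$) and no new constants. $\mathbb{F}(t)[\sigma]$ is the Ore polynomial ring of polynomials $\sum a_i\sigma^i$ ($a_i\in\mathbb{F}(t)$) with multiplication determined by $\sigma a=\sigma(a)\sigma$; $\mathbb{F}(t)[\sigma,\sigma^{-1}]$ is its localisation at powers of $\sigma$. Unimodular means having a two-sided inverse over the same ring. A square system $A(y)=b$, $A=\sum_{i=0}^\ell A_i\sigma^i$, is head regular if $\det A_\ell\ne0$, and fully regular if it is head regular and there is a unimodular $V$ over $\mathbb{F}(t)[\sigma,\sigma^{-1}]$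 with $VA\in\mathbb{F}(t)[\sigma]^{n\times n}$ whose coefficient of $\sigma^0$ has nonzero determinant. *)

(* Defs.v *)
From HB Require Import structures.
From mathcomp Require Import all_boot all_order all_algebra.
Set Implicit Arguments. Unset Strict Implicit. Unset Printing Implicit Defensive.
Import Order.TTheory GRing.Theory Num.Theory.
Local Open Scope ring_scope.

Notation ratfun F := {fraction {poly F}}.

Definition constF (F : fieldType) (c : F) : ratfun F := FracField.tofrac c%:P.
Definition tvar (F : fieldType) : ratfun F := FracField.tofrac 'X.

Definition difference_field (F : fieldType) (sigma0 sigma0i : {rmorphism F -> F}) :=
  [pchar F] =i pred0 /\ cancel sigma0 sigma0i /\ cancel sigma0i sigma0.

(* (F(t), sigma) is a PiSigma-extension of (F, sigma0): sigma is an automorphism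
   of F(t) (inverse sigmai) extending sigma0, with sigma(t) = t + beta (Sigma case)
   or sigma(t) = alpha * t (Pi case), alpha, beta in F \ {0}, and no new constants. *)
Definition PiSigma_ext (F : fieldType) (sigma0 : {rmorphism F -> F})
    (sigma sigmai : {rmorphism ratfun F -> ratfun F}) :=
  [/\ cancel sigma sigmai, cancel sigmai sigma,
      (forall c : F, sigma (constF c) = constF (sigma0 c)),
      (exists2 beta : F, beta != 0 & sigma (tvar F) = tvar F + constF beta) \/
      (exists2 alpha : F, alpha != 0 & sigma (tvar F) = constF alpha * tvar F)
    & (forall x : ratfun F, sigma x = x -> exists2 c : F, sigma0 c = c & x = constF c)].

Section OreMatrices.
Variables (K : fieldType) (sigma sigmai : K -> K) (n : nat).

Definition spow (k : int) : K -> K :=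
  match k with
  | Posz m => iter m sigma
  | Negz m => iter m.+1 sigmai
  end.

(* An element sum_{i} M_i sigma^(lo + i) of K[sigma, sigma^-1]^(n x n),
   given by its lowest exponent lo and coefficient list. *)
Record lmat := LMat { lm_lo : int; lm_cf : seq 'M[K]_n }.

Definition lcoef (L : lmat) (k : int) : 'M[K]_n :=
  if (lm_lo L <= k) then nth 0 (lm_cf L) `|k - lm_lo L|%N else 0.

Definition ore_mat (A : seq 'M[K]_n) : lmat := LMat 0 A.

(* Coefficient of sigma^k in the Ore product V * W, using
   (M sigma^i)(N sigma^j) = M sigma^i(N) sigma^(i+j). *)
Definition lmul_coef (V W : lmat) (k : int) : 'M[K]_n :=
  \sum_(i < size (lm_cf V))
     nth 0 (lm_cf V) i *m map_mx (spow (lm_lo V + i%:Z)) (lcoef W (k - (lm_lo V + i%:Z))).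

Definition lone_coef (k : int) : 'M[K]_n := if k == 0 then 1%:M else 0.

Definition unimodular (V : lmat) :=
  exists W : lmat, (forall k, lmul_coef V W k = lone_coef k) /\
                   (forall k, lmul_coef W V k = lone_coef k).

End OreMatrices.

(* Main.v *)
Require Import Defs.
From HB Require Import structures.
From mathcomp Require Import all_boot all_order all_algebra.
From mathcomp Require Import zify.
Import Order.TTheory GRing.Theory Num.Theory.
Local Open Scope ring_scope.

Section Sp.
Variables (K : fieldType) (s si : {rmorphism K -> K}).
Hypotheses (ssi : cancel s si) (sis : cancel si s).

Fixpoint itr (f : {rmorphism K -> K}) (m : nat) : {rmorphism K -> K} :=
  match m with 0%N => idfun | m.+1 => (f \o itr f m)%FUN end.

Lemma itrE f m x : itr f m x = iter m f x.
Proof. by elim: m => //= m ->. Qed.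

Definition spr (k : int) : {rmorphism K -> K} :=
  match k with Posz m => itr s m | Negz m => itr si m.+1 end.

Lemma sprE k x : spow s si k x = spr k x.
Proof. by case: k => m /=; rewrite itrE. Qed.

Lemma spr0 x : spr 0 x = x. Proof. by []. Qed.

Lemma sprS k x : spr (k + 1) x = s (spr k x).
Proof.
case: k => m.
  have -> : Posz m + 1 = Posz m.+1 by rewrite -addn1 PoszD.
  by [].
case: m => [|m].
  by have -> : Negz 0 + 1 = 0 by []; rewrite /= sis.
have -> : Negz m.+1 + 1 = Negz m by rewrite !NegzE; lia.
by rewrite /= sis.
Qed.

Lemma sprP k x : spr (k - 1) x = si (spr k x).
Proof. by rewrite -[in RHS](subrK 1 k) sprS ssi. Qed.

Lemma sprD a b x : spr (a + b) x = spr a (spr b x).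
Proof.
case: a => m.
  elim: m => [|m IH]; first by rewrite add0r.
  by rewrite -addn1 PoszD addrAC sprS IH -sprS.
elim: m => [|m IH].
  have -> : Negz 0 + b = b - 1 by rewrite NegzE addrC.
  by rewrite sprP.
have -> : Negz m.+1 = Negz m - 1 by rewrite !NegzE; lia.
by rewrite addrAC !sprP IH.
Qed.

Variable n : nat.
Notation M := 'M[K]_n.

Definition msp (k : int) (X : M) : M := map_mx (spr k) X.

Lemma mspM k (X Y : M) : msp k (X *m Y) = msp k X *m msp k Y.
Proof. exact: map_mxM. Qed.
Lemma msp0 k : msp k 0 = 0. Proof. exact: map_mx0. Qed.
Lemma msp1 k : msp k 1%:M = 1%:M. Proof. exact: map_mx1. Qed.
Lemma mspD k (X Y : M) : msp k (X + Y) = msp k X + msp k Y.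
Proof. exact: map_mxD. Qed.
Lemma msp_sum k (I : finType) (F : I -> M) :
  msp k (\sum_i F i) = \sum_i msp k (F i).
Proof. exact: map_mx_sum. Qed.
Lemma mspC a b X : msp a (msp b X) = msp (a + b) X.
Proof. by apply/matrixP => i j; rewrite !mxE sprD. Qed.
Lemma msp_0 X : msp 0 X = X.
Proof. by apply/matrixP => i j; rewrite !mxE. Qed.
Lemma mspE k X i j : msp k X i j = spr k (X i j).
Proof. by rewrite mxE. Qed.

Lemma distE (a b : int) : `|a - b|%N = absz (a - b)%R. Proof. by []. Qed.

Definition lwin (a : int) (N : nat) (P : int -> M) : M :=
  \sum_(i < N) P (a + i%:Z).

Definition vanish (a : int) (N : nat) (P : int -> M) :=
  forall k : int, ~~ (a <= k < a + N%:Z) -> P k = 0.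

Lemma lwin_ext a N a' N' P : vanish a N P -> a' <= a -> a + N%:Z <= a' + N'%:Z ->
  lwin a' N' P = lwin a N P.
Proof.
move=> HP h1 h2.
set d := `|a - a'|%N. set r := (N' - d - N)%N.
have HN : N' = (d + (N + r))%N by rewrite /r /d; lia.
rewrite /lwin HN big_split_ord /= big1 ?add0r => [|i _]; last first.
  by rewrite HP //; move: (ltn_ord i); rewrite /d; lia.
rewrite big_split_ord /= [X in _ + X]big1 ?addr0 => [|i _]; last first.
  by rewrite HP //; rewrite /d; lia.
apply: eq_bigr => i _; congr P; rewrite /d; lia.
Qed.

Lemma lwin_eq2 a N b N' P : vanish a N P -> vanish b N' P -> lwin a N P = lwin b N' P.
Proof.
move=> Ha Hb.
rewrite -(@lwin_ext a N (a - `|a - b|%N%:Z) (N + N' + 2 * `|a - b|)%N) //; try lia.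
rewrite (@lwin_ext b N' (a - `|a - b|%N%:Z) (N + N' + 2 * `|a - b|)%N) //; lia.
Qed.

Record LF := LFm { lf : int -> M ; llo : int ; llen : nat ;
  lsupp : vanish llo llen lf }.

Definition summ (f g : LF) (k : int) := fun j => lf f j *m msp j (lf g (k - j)).

Lemma mulLF_supp f g : vanish (llo f + llo g) (llen f + llen g)
  (fun k => lwin (llo f) (llen f) (summ f g k)).
Proof.
move=> k Hk; rewrite /lwin big1 // => i _; rewrite /summ.
rewrite (@lsupp g) ?msp0 ?mulmx0 //.
move: Hk (ltn_ord i); case: g => /= lf' lo' len' _; lia.
Qed.

Definition mulLF f g := @LFm _ _ _ (@mulLF_supp f g).

Lemma mul_win f g k a N : vanish a N (summ f g k) ->
  lf (mulLF f g) k = lwin a N (summ f g k).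
Proof.
move=> H; apply: lwin_eq2 => // j Hj.
by rewrite /summ lsupp // mul0mx.
Qed.

Lemma mulLF_congr f f' g g' : lf f =1 lf f' -> lf g =1 lf g' ->
  lf (mulLF f g) =1 lf (mulLF f' g').
Proof.
move=> Hf Hg k; rewrite (@mul_win f' g' k (llo f) (llen f)).
  by apply: eq_bigr => i _; rewrite /summ Hf Hg.
by move=> j Hj; rewrite /summ -Hf lsupp // mul0mx.
Qed.

Lemma mon_supp (P : M) (e : int) : vanish e 1 (fun k => if k == e then P else 0).
Proof. by move=> k Hk; case: eqP => // Hke; move: Hk; rewrite Hke; lia. Qed.
Definition mon P e := @LFm _ _ _ (mon_supp P e).
Definition one := mon 1%:M 0.

Lemma mul_mon_l P e g k : lf (mulLF (mon P e) g) k = P *m msp e (lf g (k - e)).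
Proof. by rewrite /= /lwin big_ord1 /summ /= addr0 eqxx. Qed.

Lemma mul1LF g : lf (mulLF one g) =1 lf g.
Proof. by move=> k; rewrite mul_mon_l subr0 msp_0 mul1mx. Qed.

Lemma mulLF1 f : lf (mulLF f one) =1 lf f.
Proof.
move=> k; rewrite (@mul_win _ _ k k 1).
  by rewrite /lwin big_ord1 /summ /= addr0 subrr eqxx msp1 mulmx1.
move=> j Hj; rewrite /summ /=.
have -> : (k - j == 0) = false by apply/negbTE; move: Hj; lia.
by rewrite msp0 mulmx0.
Qed.

Lemma mulLFA f g h : lf (mulLF (mulLF f g) h) =1 lf (mulLF f (mulLF g h)).
Proof.
move=> k; rewrite /= /lwin /summ /=.
under eq_bigr do rewrite mulmx_suml.
rewrite exchange_big /=; apply: eq_bigr => i _.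
rewrite msp_sum mulmx_sumr.
set i' := llo f + i%:Z.
transitivity (lwin (i' + llo g) (llen g)
   (fun j => lf f i' *m msp i' (lf g (j - i')) *m msp j (lf h (k - j)))).
  rewrite -(@lwin_ext (i' + llo g) (llen g) (llo f + llo g) (llen f + llen g)).
  - by rewrite /lwin; apply: eq_bigr => j _.
  - move=> j Hj; rewrite (@lsupp g) ?msp0 ?mulmx0 ?mul0mx //.
    by move: Hj; lia.
  - by rewrite /i'; lia.
  - by move: (ltn_ord i); rewrite /i'; lia.
rewrite /lwin; apply: eq_bigr => j _.
rewrite mspM mspC -mulmxA.
have -> : i' + llo g + j%:Z - i' = llo g + j%:Z by lia.
rewrite (_ : k - (i' + llo g + j%:Z) = k - i' - (llo g + j%:Z)); last by lia.
by rewrite (_ : i' + (llo g + j%:Z) = i' + llo g + j%:Z) //; lia.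
Qed.

Definition unimodLF (U : LF) :=
  exists W, lf (mulLF U W) =1 lf one /\ lf (mulLF W U) =1 lf one.

Lemma unimod_mul U V : unimodLF U -> unimodLF V -> unimodLF (mulLF U V).
Proof.
move=> [W1 [h1 h2]] [W2 [h3 h4]]; exists (mulLF W2 W1); split => k.
  rewrite mulLFA (@mulLF_congr _ _ _ _ (frefl _) (fun k => esym (mulLFA V W2 W1 k)) k).
  rewrite (@mulLF_congr _ _ _ _ (frefl _) (@mulLF_congr _ _ _ _ h3 (frefl _)) k).
  by rewrite (@mulLF_congr _ _ _ _ (frefl _) (mul1LF W1) k).
rewrite mulLFA (@mulLF_congr _ _ _ _ (frefl _) (fun k => esym (mulLFA W1 U V k)) k).
rewrite (@mulLF_congr _ _ _ _ (frefl _) (@mulLF_congr _ _ _ _ h2 (frefl _)) k).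
by rewrite (@mulLF_congr _ _ _ _ (frefl _) (mul1LF V) k).
Qed.

Lemma mul0LF X Y : lf X =1 (fun _ => 0) -> lf (mulLF X Y) =1 (fun _ => 0).
Proof. by move=> H k; rewrite /= /lwin big1 // => i _; rewrite /summ H mul0mx. Qed.

Lemma mul_mon0 P Q : lf (mulLF (mon P 0) (mon Q 0)) =1 lf (mon (P *m Q) 0).
Proof. by move=> k; rewrite mul_mon_l subr0 msp_0 /=; case: eqP; rewrite ?mulmx0. Qed.

Lemma unimod_const P : P \in unitmx -> unimodLF (mon P 0).
Proof.
move=> HP; exists (mon (invmx P) 0); split => k; rewrite mul_mon0 /=.
  by rewrite mulmxV.
by rewrite mulVmx.
Qed.

Lemma ofL_supp (V : lmat K n) : vanish (lm_lo V) (size (lm_cf V)) (lcoef V).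
Proof.
move=> k Hk; rewrite /lcoef; case: ifP => // h.
by rewrite nth_default // distE; move: Hk h; move: (size _) (lm_lo V) => m l; lia.
Qed.
Definition ofL V := @LFm _ _ _ (ofL_supp V).

Lemma lmulE (V W : lmat K n) k : lmul_coef s si V W k = lf (mulLF (ofL V) (ofL W)) k.
Proof.
rewrite /lmul_coef /= /lwin /summ /=; apply: eq_bigr => i _.
have -> : lcoef V (lm_lo V + i%:Z) = nth 0 (lm_cf V) i.
  rewrite /lcoef ifT; last by move: (lm_lo V) => l; lia.
  by rewrite distE; congr nth; move: (lm_lo V) => l; lia.
congr (_ *m _); apply/matrixP => a b; rewrite !mxE sprE //.
Qed.

Lemma toL_supp (f : LF) : vanish (llo f) (llen f) (lf f).
Proof. exact: lsupp. Qed.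
Definition toL (f : LF) : lmat K n :=
  LMat (llo f) (mkseq (fun i => lf f (llo f + i%:Z)) (llen f)).

Lemma toLE f : lf (ofL (toL f)) =1 lf f.
Proof.
move=> k; rewrite /= /lcoef /=; case: ifP => h.
  rewrite distE; case: (ltnP (absz (k - llo f)) (llen f)) => h2.
    by rewrite nth_mkseq //; congr (lf f); lia.
  by rewrite nth_default ?size_mkseq // lsupp //; lia.
by rewrite lsupp //; lia.
Qed.

Variable A : seq M.
Hypothesis sA : (0 < size A)%N.
Hypothesis dA : \det (last 0 A) != 0.
Definition aL := ofL (ore_mat A).

Lemma aL_top k : ((size A).-1%:Z < k) -> lf aL k = 0.
Proof.
move=> h; rewrite /= /lcoef /= distE subr0; case: ifP => // h2.
rewrite nth_default //; move: h h2 sA; move: (size A) => m; lia.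
Qed.

Lemma aL_last : lf aL ((size A).-1%:Z) = last 0 A.
Proof. by rewrite /= /lcoef /= addn0 nth_last. Qed.

Lemma kernelA X : lf (mulLF X aL) =1 (fun _ => 0) -> lf X =1 (fun _ => 0).
Proof.
move=> H.
set l := (size A).-1.
have step : forall d : nat, (forall k, llo X + d.+1%:Z <= k -> lf X k = 0) ->
    forall k, llo X + d%:Z <= k -> lf X k = 0.
  move=> d Hd k Hk; case: (ltP (llo X + d%:Z) k) => h1; first by apply: Hd; lia.
  have {h1 Hk} Hk : k = llo X + d%:Z by lia.
  have HB : msp k (last 0 A) \in unitmx.
    by rewrite unitmxE /msp det_map_mx unitfE fmorph_eq0.
  have := H (k + l%:Z); rewrite (@mul_win X aL (k + l%:Z) k 1).
    rewrite /lwin big_ord1 addr0 /summ (_ : k + l%:Z - k = l%:Z); last by lia.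
    by rewrite aL_last => h0; rewrite -(mulmxK HB (lf X k)) h0 mul0mx.
  move=> j Hj; rewrite /summ; case: (ltP k j) => h2.
    by rewrite Hd ?mul0mx //; lia.
  by rewrite aL_top ?msp0 ?mulmx0 //; move: Hj; rewrite /l; lia.
have top : forall r, (r <= llen X)%N -> forall k, llo X + (llen X - r)%N%:Z <= k -> lf X k = 0.
  elim => [|r IH] hr.
    by move=> k hk; rewrite lsupp //; move: hk; rewrite subn0; lia.
  apply: step; have -> : (llen X - r.+1).+1 = (llen X - r)%N by lia.
  by apply: IH; lia.
move=> k; case: (ltP k (llo X)) => hk; first by rewrite lsupp //; lia.
by apply: (top (llen X)) => //; rewrite subnn; lia.
Qed.

Section Ops.
Variable i : 'I_n.

Definition Cm (c : 'rV[K]_n) : M :=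
  \matrix_(a, b) if a == i then c 0 b else (a == b)%:R.

Lemma Cm_mulE (c : 'rV[K]_n) (X : M) a b :
  (Cm c *m X) a b = if a == i then \sum_l c 0 l * X l b else X a b.
Proof.
rewrite mxE; case: eqP => ha.
  by apply: eq_bigr => l _; rewrite mxE ha eqxx.
rewrite (bigD1 a) //= mxE (introF eqP ha) eqxx mul1r big1 ?addr0 // => l hl.
by rewrite mxE (introF eqP ha) eq_sym (negbTE hl) mul0r.
Qed.

Lemma vCm (c : 'rV[K]_n) (v : 'rV[K]_n) b :
  (v *m Cm c) 0 b = v 0 i * c 0 b + (if b == i then 0 else v 0 b).
Proof.
rewrite mxE (bigD1 i) //= mxE eqxx; congr (_ + _); case: eqP => hb.
  by rewrite big1 // => a ha; rewrite mxE (negbTE ha) hb (negbTE ha) mulr0.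
have hbi : b != i by apply/eqP.
rewrite (bigD1 b) //= mxE (negbTE hbi) eqxx mulr1 big1 ?addr0 // => a /andP [ha hab].
by rewrite mxE (negbTE ha) (negbTE hab) mulr0.
Qed.

Lemma Cm_unit (c : 'rV[K]_n) : c 0 i != 0 -> Cm c \in unitmx.
Proof.
move=> hc; rewrite unitmxE unitfE; apply/negP => /det0P [v vn0 hv].
have hvb b : v 0 i * c 0 b + (if b == i then 0 else v 0 b) = 0.
  by rewrite -vCm hv mxE.
have hvi : v 0 i = 0.
  by move: (hvb i); rewrite eqxx addr0 => /eqP; rewrite mulf_eq0 (negbTE hc) orbF => /eqP.
move/eqP: vn0; apply; apply/matrixP => z b; rewrite (ord1 z) mxE.
by move: (hvb b); rewrite hvi mul0r add0r; case: eqP => // ->.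
Qed.

Definition Ei : M := \matrix_(a, b) ((a == i) && (b == i))%:R.
Definition Eo : M := \matrix_(a, b) ((a != i) && (a == b))%:R.

Lemma EiE (Y : M) a b : (Ei *m Y) a b = if a == i then Y i b else 0.
Proof.
rewrite mxE; case: eqP => ha.
  rewrite (bigD1 i) //= mxE ha !eqxx mul1r big1 ?addr0 // => l hl.
  by rewrite mxE (negbTE hl) andbF mul0r.
by rewrite big1 // => l _; rewrite mxE (introF eqP ha) mul0r.
Qed.

Lemma EoE (Y : M) a b : (Eo *m Y) a b = if a == i then 0 else Y a b.
Proof.
rewrite mxE; case: eqP => ha.
  by rewrite big1 // => l _; rewrite mxE ha eqxx mul0r.
rewrite (bigD1 a) //= mxE (introF eqP ha) eqxx mul1r big1 ?addr0 // => l hl.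
by rewrite mxE (introF eqP ha) eq_sym (negbTE hl) mul0r.
Qed.

Lemma msp_Ei k : msp k Ei = Ei.
Proof. by apply/matrixP => a b; rewrite !mxE rmorph_nat. Qed.
Lemma msp_Eo k : msp k Eo = Eo.
Proof. by apply/matrixP => a b; rewrite !mxE rmorph_nat. Qed.

Lemma Sh_supp e : vanish (e - `|e|%N%:Z) (2 * `|e| + 1)%N
  (fun k => (if k == e then Ei else 0) + (if k == 0 then Eo else 0)).
Proof.
move=> k Hk.
have -> : (k == e) = false by apply/negbTE; move: Hk; lia.
have -> : (k == 0) = false by apply/negbTE; move: Hk; lia.
by rewrite addr0.
Qed.
Definition Sh e := @LFm _ _ _ (Sh_supp e).

Lemma lwin_single a N e X (F : int -> M) : a <= e < a + N%:Z ->
  lwin a N (fun j => (if j == e then X else 0) *m F j) = X *m F e.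
Proof.
move=> h; rewrite (@lwin_ext e 1 a N).
- by rewrite /lwin big_ord1 addr0 eqxx.
- move=> j hj; rewrite (_ : (j == e) = false) ?mul0mx //; apply/negbTE; move: hj; lia.
- by move: h; lia.
- by move: h; lia.
Qed.

Lemma mulSh e G k : lf (mulLF (Sh e) G) k = Ei *m msp e (lf G (k - e)) + Eo *m lf G k.
Proof.
rewrite /= /summ.
rewrite (_ : lwin _ _ _ = lwin (e - `|e|%N%:Z) (2 * `|e| + 1)
  (fun j => (if j == e then Ei else 0) *m msp j (lf G (k - j))) +
  lwin (e - `|e|%N%:Z) (2 * `|e| + 1)
  (fun j => (if j == 0 then Eo else 0) *m msp j (lf G (k - j)))).
  rewrite !lwin_single; first by rewrite subr0 msp_0.
  - by lia.
  - by lia.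
by rewrite /lwin -big_split /=; apply: eq_bigr => j _; rewrite mulmxDl.
Qed.


Lemma EiEi : Ei *m Ei = Ei.
Proof.
apply/matrixP => a b; rewrite ?EiE ?EoE !mxE; case: (a =P i) => ha; rewrite ?eqxx //=.
Qed.
Lemma EiEo : Ei *m Eo = 0.
Proof.
apply/matrixP => a b; rewrite ?EiE ?EoE !mxE; case: (a =P i) => ha; rewrite ?eqxx //=.
Qed.
Lemma EoEi : Eo *m Ei = 0.
Proof.
apply/matrixP => a b; rewrite ?EiE ?EoE !mxE; case: (a =P i) => ha; rewrite ?eqxx //=.
Qed.
Lemma EoEo : Eo *m Eo = Eo.
Proof.
apply/matrixP => a b; rewrite ?EiE ?EoE !mxE; case: (a =P i) => ha; rewrite ?eqxx //=.
Qed.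
Lemma EiEo1 : Ei + Eo = 1%:M.
Proof.
apply/matrixP => a b; rewrite !mxE; case: (a =P i) => ha /=.
  subst a; case: (b =P i) => hb /=; first by subst b; rewrite eqxx addr0.
  by rewrite eq_sym (introF eqP hb) addr0.
by rewrite add0r.
Qed.

Lemma ShK e G : lf (mulLF (Sh e) (mulLF (Sh (-e)) G)) =1 lf G.
Proof.
move=> k; rewrite !mulSh mspD !mspM msp_Ei msp_Eo !mspC addrN msp_0 opprK subrK.
rewrite !mulmxDr !mulmxA EiEi EiEo EoEi EoEo !mul0mx addr0 add0r -mulmxDl EiEo1.
by rewrite mul1mx.
Qed.

Lemma unimod_Sh e : unimodLF (Sh e).
Proof.
exists (Sh (-e)); split => k.
  by rewrite -[LHS](mulLF1 _ k) mulLFA ShK.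
rewrite -[LHS](mulLF1 _ k) mulLFA.
have h : lf (Sh e) =1 lf (Sh (- - e)) by move=> j; rewrite /= opprK.
rewrite (@mulLF_congr _ _ _ _ (frefl _) (@mulLF_congr _ _ _ _ h (frefl _)) k).
exact: ShK.
Qed.

End Ops.

Definition state (U : LF) (t : 'I_n -> nat) :=
  [/\ unimodLF U, (forall k, k < 0 -> lf (mulLF U aL) k = 0) &
      (forall (a : 'I_n) (k : int) b, (t a)%:Z < k -> lf (mulLF U aL) k a b = 0)].

Lemma stepL U t : state U t -> \det (lf (mulLF U aL) 0) == 0 ->
  exists U' t', state U' t' /\ (\sum_a t' a < \sum_a t a)%N.
Proof.
move=> [hU hpol hbd] /det0P [c cn0 hc].
set Mk := lf (mulLF U aL).
have [j0 hj0] : exists j, c 0 j != 0.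
  case: (pickP (fun j => c 0 j != 0)) => [j hj|h]; first by exists j.
  move/eqP: cn0; case; apply/matrixP => z b; rewrite (ord1 z) mxE.
  by move: (h b) => /= /negbFE /eqP.
case: (@arg_maxnP _ j0 (fun j => c 0 j != 0) t hj0) => i hi imax.
set U1 := mulLF (mon (Cm i c) 0) U.
have M1E (k : int) : lf (mulLF U1 aL) k = Cm i c *m Mk k.
  by rewrite mulLFA mul_mon_l subr0 msp_0.
have M1e (k : int) a b : lf (mulLF U1 aL) k a b = if a == i then \sum_l c 0 l * Mk k l b else Mk k a b.
  by rewrite M1E Cm_mulE.
have Mneg (k : int) : k < 0 -> Mk k = 0 by exact: hpol.
have row (k : int) b : (t i)%:Z < k -> lf (mulLF U1 aL) k i b = 0.
  move=> hk; rewrite M1e eqxx big1 // => l _.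
  case: (c 0 l =P 0) => [->|/eqP hl]; first by rewrite mul0r.
  by rewrite hbd ?mulr0 //; move: (imax l hl); lia.
have row0 b : lf (mulLF U1 aL) 0 i b = 0.
  by rewrite M1e eqxx; move: (congr1 (fun X : 'rV[K]_n => X 0 b) hc); rewrite !mxE.
have rowneg (k : int) b : k < 0 -> lf (mulLF U1 aL) k i b = 0.
  by move=> hk; rewrite M1E Mneg // mulmx0 mxE.
have hU1 : unimodLF U1 by apply: unimod_mul => //; apply: unimod_const; exact: Cm_unit.
have tpos : (0 < t i)%N.
  case: (posnP (t i)) => // ht.
  exfalso; move: hU1 => [W1 [hW1 _]].
  set P := mon (Ei i) 0.
  have h1 : lf (mulLF (mulLF P U1) aL) =1 (fun _ => 0).
    move=> k; rewrite mulLFA mul_mon_l subr0 msp_0; apply/matrixP => a b.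
    rewrite EiE mxE; case: (a == i) => //.
    case: (ltP 0 k) => hk; first by apply: row; rewrite ht.
    case: (k =P 0) => [->|hk0]; first exact: row0.
    by apply: rowneg; lia.
  have h2 := @kernelA _ h1.
  have h3 := @mul0LF _ W1 h2.
  move: (h3 0); rewrite mulLFA (@mulLF_congr _ _ _ _ (frefl _) hW1 0) mulLF1 /=.
  move/matrixP => /(_ i i); rewrite !mxE !eqxx /= => /eqP; by rewrite oner_eq0.
set U2 := mulLF (Sh i (-1)) U1.
have M2e (k : int) a b : lf (mulLF U2 aL) k a b =
    if a == i then spr (-1) (lf (mulLF U1 aL) (k + 1) i b) else lf (mulLF U1 aL) k a b.
  rewrite mulLFA mulSh mxE EiE EoE opprK mspE; by case: (a == i); rewrite ?addr0 ?add0r.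
exists U2, (fun j => if j == i then (t i).-1 else t j); split; first split.
- by apply: unimod_mul => //; exact: unimod_Sh.
- move=> k hk; apply/matrixP => a b; rewrite M2e mxE; case: (a =P i) => ha.
    case: (k + 1 =P 0) => [->|hk1]; first by rewrite row0 rmorph0.
    by rewrite rowneg ?rmorph0 //; lia.
  by rewrite M1e (introF eqP ha) Mneg ?mxE.
- move=> a k b; case: (a =P i) => ha hk; rewrite M2e.
    by rewrite ha eqxx row ?rmorph0 //; move: hk tpos; lia.
  by rewrite (introF eqP ha) M1e (introF eqP ha) hbd.
rewrite [X in (X < _)%N](bigD1 i) // [X in (_ < X)%N](bigD1 i) //= eqxx.
rewrite (eq_bigr (fun j => t j)); last by move=> j /negbTE ->.
by rewrite ltn_add2r; lia.
Qed.

Lemma mainL m U t : (\sum_a t a < m)%N -> state U t ->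
  exists V (L : nat), unimodLF V /\
    (forall k, (k < 0) || (L%:Z < k) -> lf (mulLF V aL) k = 0) /\
    \det (lf (mulLF V aL) 0) != 0.
Proof.
elim: m U t => [//|m IH] U t hs st.
case hd: (\det (lf (mulLF U aL) 0) == 0).
  have [U' [t' [st' hs']]] := @stepL _ _ st hd.
  by apply: (IH U' t') => //; lia.
case: st => hU hpol hbd.
exists U, (\sum_a t a); split => //; split; last by rewrite hd.
move=> k /orP [hk|hk]; first exact: hpol.
apply/matrixP => a b; rewrite hbd ?mxE //.
apply: le_lt_trans hk; rewrite lez_nat.
by rewrite (bigD1 a) //= leq_addr.
Qed.

Lemma initL : state one (fun _ => (size A).-1).
Proof.
split.
- by exists one; split => k; rewrite mul1LF.
- move=> k hk; rewrite mul1LF /= /lcoef /=; case: ifP => //; lia.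
- by move=> a k b hk; rewrite mul1LF aL_top // mxE.
Qed.

End Sp.

Theorem mainTheorem6 (F : fieldType) (sigma0 sigma0i : {rmorphism F -> F})
  (sigma sigmai : {rmorphism ratfun F -> ratfun F}) (n : nat)
  (A : seq 'M[ratfun F]_n) :
  difference_field sigma0 sigma0i ->
  PiSigma_ext sigma0 sigma sigmai ->
  (0 < size A)%N ->
  \det (last 0 A) != 0 ->
  exists (ltil : nat) (V : lmat (ratfun F) n),
    unimodular sigma sigmai V /\
    (forall k : int, (k < 0) || (ltil%:Z < k) ->
       lmul_coef sigma sigmai V (ore_mat A) k = 0) /\
    \det (lmul_coef sigma sigmai V (ore_mat A) 0) != 0.
Proof.
move=> _ [ssi sis _ _ _] sA dA.
have [Vf [L [[Wf [h1 h2]] [hz hd]]]] :=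
  @mainL _ _ _ ssi sis _ _ sA dA _ _ _ (ltnSn _) (@initL _ sigma sigmai _ _ sA dA).
exists L, (@toL _ _ Vf); split; [exists (@toL _ _ Wf); split => k | split].
- rewrite lmulE (@mulLF_congr _ _ _ _ _ _ _ _ (@toLE _ _ Vf) (@toLE _ _ Wf) k).
  exact: h1.
- rewrite lmulE (@mulLF_congr _ _ _ _ _ _ _ _ (@toLE _ _ Wf) (@toLE _ _ Vf) k).
  exact: h2.
- move=> k hk; rewrite lmulE (@mulLF_congr _ _ _ _ _ _ _ _ (@toLE _ _ Vf) (frefl _) k).
  exact: hz.
- rewrite lmulE (@mulLF_congr _ _ _ _ _ _ _ _ (@toLE _ _ Vf) (frefl _) 0).
  exact: hd.
Qed.
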